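(* Let $d\in\mathbb N$ and $\varepsilon\in(0,1]$, and let $h=h(d,\varepsilon)$ be the height and $\mathcal P^d_\varepsilon$ the set of leaves of Thiémard's decomposition process (see context). Then $$h=\min\{r\in\mathbb N_0:\ W(Q^{(r)}_{\mathbf 1_r})\le\varepsilon\}$$ (with $Q^{(0)}_{\mathbf 1_0}:=Q^{(0)}_0=I^d$), and $$h\le \lceil d(\varepsilon^{-1}-1)\rceil.$$ Moreover, if $d=2$ then $$|\mathcal P^2_\varepsilon|\le 2\Big(\frac1\varepsilon+\frac12\Big)\frac1\varepsilon,$$ and if $d\ge3$ then $$|\mathcal P^d_\varepsilon|\le \frac{d^d}{d!}\Big(\frac1\varepsilon-\frac12\Big(1-\frac3d\Big)\Big)^d\le \frac{d^d}{d!}\,\varepsilon^{-d}.$$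
   Context: Fix $d\in\mathbb N$ and $\varepsilon\in(0,1]$. For $x,y\in[0,1]^d$ write $[x,y)=\prod_{i=1}^d[x_i,y_i)$ and define the weight $W([x,y))=\prod_{i=1}^d y_i-\prod_{i=1}^d x_i$. Thiémard's decomposition process generates boxes, each with a type in $\{1,\dots,d+1\}$. It starts with $I^d=[0,1)^d=[(0,\dots,0),(1,\dots,1))$, of type $1$. Whenever a generated box $P=[\alpha,\beta)$ has type $j\le d$ and $W(P)>\varepsilon$, it is decomposed (procedure DECOMPOSE$(P,j)$) as follows: put $$\delta^P=\left(\frac{\prod_{i=1}^d\beta_i-\varepsilon}{\prod_{i=1}^{j-1}\alpha_i\prod_{i=j}^d\beta_i}\right)^{1/(d-j+1)},\qquad \gamma^P_i=\alpha_i\ (i<j),\quad \gamma^P_i=\delta^P\beta_i\ (i\ge j).$$ The children of $P$ are the boxes $Q^P_k=[a^{(k)},b^{(k)})$ for $k=j,\dots,d$, where $a^{(k)}_i=\gamma^P_i$ for $i<k$, $a^{(k)}_i=\alpha_i$ for $i\ge k$, $b^{(k)}_k=\gamma^P_k$, $b^{(k)}_i=\beta_i$ for $i\neq k$; the box $Q^P_k$ has type $k$. In addition $P$ has the child $Q^P_{d+1}=[\gamma^P,\beta)$ of type $d+1$. A generated box of type $d+1$ or of weight at most $\varepsilon$ is not decomposed. (Known facts from Thiémard: $\delta^P\in(0,1)$; the process terminates after finitely many steps; $W(Q^P_{d+1})=\varepsilon$ and $W(Q^P_k)=\delta^PW(P)$ for $j\le k\le d$.) $\mathcal P^d_\varepsilon$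 denotes the set of all generated boxes that are not decomposed (the leaves of the process). Indexing: for $r\in\mathbb N$ let $S^r=\{\boldsymbol i\in\mathbb N^r: 1\le i_1\le\dots\le i_r\le d\}$, $S^0=\{0\}$, and $\mathbf 1_r=(1,\dots,1)\in\mathbb N^r$. Put $Q^{(0)}_0=I^d$, $Q^{(1)}_{j_1}=Q^{I^d}_{j_1}$ ($j_1=1,\dots,d$, defined when $W(I^d)>\varepsilon$), and for $\boldsymbol j\in S^r$ with $Q^{(r)}_{\boldsymbol j}$ generated and $W(Q^{(r)}_{\boldsymbol j})>\varepsilon$, $Q^{(r+1)}_{(\boldsymbol j,j_{r+1})}=Q^{Q^{(r)}_{\boldsymbol j}}_{j_{r+1}}$ for $j_{r+1}=j_r,\dots,d$. The height $h=h(d,\varepsilon)$ of the partition is $0$ if $W(I^d)\le\varepsilon$, and otherwise the largest $h\in\mathbb N$ such that there is $\boldsymbol j\in S^{h-1}$ with $Q^{(h-1)}_{\boldsymbol j}$ generated and $W(Q^{(h-1)}_{\boldsymbol j})>\varepsilon$. *)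

(* Defs.v *)
From Stdlib Require Import Reals Lra Lia List Arith.
Open Scope R_scope.

(* Points of [0,1]^d are functions nat -> R; only coordinates 1..d matter.
   All generated boxes have lower corner 0 and upper corner 1 outside 1..d,
   so Leibniz equality of boxes coincides with equality on coordinates 1..d. *)
Definition point := nat -> R.
Definition box := (point * point)%type.   (* [alpha, beta) *)

Fixpoint prodn (f : point) (a n : nat) : R :=
  match n with
  | O => 1
  | S n' => f a * prodn f (S a) n'
  end.

Definition prodd (d : nat) (x : point) : R := prodn x 1 d.

Definition W (d : nat) (P : box) : R := prodd d (snd P) - prodd d (fst P).

Definition Id : box := (fun _ => 0, fun _ => 1).

Definition delta (d : nat) (eps : R) (P : box) (j : nat) : R :=
  let (al, be) := P in
  Rpower ((prodd d be - eps) /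
          (prodn al 1 (j - 1) * prodn be j (d - j + 1)))
         (/ INR (d - j + 1)).

Definition gamma (d : nat) (eps : R) (P : box) (j : nat) : point :=
  fun i => if (i <? j)%nat then fst P i
           else if (i <=? d)%nat then delta d eps P j * snd P i
           else fst P i.

(* child Q^P_k of P of type j, for k = j..d+1 *)
Definition child (d : nat) (eps : R) (P : box) (j k : nat) : box :=
  let g := gamma d eps P j in
  if (k <=? d)%nat then
    (fun i => if (i <? k)%nat then g i else fst P i,
     fun i => if (i =? k)%nat then g i else snd P i)
  else (g, snd P).

(* generated boxes together with their type *)
Inductive generated (d : nat) (eps : R) : box -> nat -> Prop :=
| gen_root : generated d eps Id 1
| gen_child : forall P j k, generated d eps P j -> (j <= d)%nat ->
    W d P > eps -> (j <= k <= d + 1)%nat ->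
    generated d eps (child d eps P j k) k.

(* leaves: generated boxes that are not decomposed (membership in P^d_eps) *)
Definition leaf (d : nat) (eps : R) (P : box) : Prop :=
  exists j, generated d eps P j /\ (j = (d + 1)%nat \/ W d P <= eps).

(* Q^{(r)}_{(j_1,...,j_r)} obtained from a box P of type j following path l *)
Fixpoint Qfrom (d : nat) (eps : R) (P : box) (j : nat) (l : list nat) : box :=
  match l with
  | nil => P
  | k :: l' => Qfrom d eps (child d eps P j k) k l'
  end.

Definition Qidx (d : nat) (eps : R) (l : list nat) : box := Qfrom d eps Id 1 l.

(* the path l = (j_1,...,j_r) lies in S^r and Q^{(r)}_l is generated:
   every ancestor has weight > eps and j_{s} <= j_{s+1} <= d *)
Fixpoint path_ok (d : nat) (eps : R) (P : box) (j : nat) (l : list nat) : Prop :=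
  match l with
  | nil => True
  | k :: l' => W d P > eps /\ (j <= k <= d)%nat /\
               path_ok d eps (child d eps P j k) k l'
  end.

Definition idx_ok (d : nat) (eps : R) (l : list nat) : Prop := path_ok d eps Id 1 l.

Definition is_height (d : nat) (eps : R) (h : nat) : Prop :=
  (W d Id <= eps /\ h = 0%nat) \/
  (W d Id > eps /\ (1 <= h)%nat /\
   (exists l, length l = (h - 1)%nat /\ idx_ok d eps l /\ W d (Qidx d eps l) > eps) /\
   (forall l, idx_ok d eps l -> W d (Qidx d eps l) > eps -> (length l + 1 <= h)%nat)).

(* ceiling: ceilR x = smallest integer >= x  (up y is the integer with y < up y <= y+1) *)
Definition ceilR (x : R) : Z := (1 - up (- x))%Z.

(* Main.v *)
Require Import Defs.
From Stdlib Require Import Reals List Arith ZArith Lra Lia.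
Open Scope R_scope.

Lemma prodn_ext f g a n : (forall i, (a <= i < a + n)%nat -> f i = g i) -> prodn f a n = prodn g a n.
Proof. revert a; induction n; intros a H; simpl; auto.
  rewrite (H a) by lia. rewrite (IHn (S a)); auto. intros; apply H; lia. Qed.

Lemma prodn_split f a n m : prodn f a (n + m) = prodn f a n * prodn f (a + n) m.
Proof. revert a; induction n; intros a; simpl. rewrite Nat.add_0_r; ring.
  rewrite IHn. replace (S a + n)%nat with (a + S n)%nat by lia. ring. Qed.

Lemma prodn_pos f a n : (forall i, (a <= i < a + n)%nat -> 0 < f i) -> 0 < prodn f a n.
Proof. revert a; induction n; intros a H; simpl. lra.
  apply Rmult_lt_0_compat. apply H; lia. apply IHn; intros; apply H; lia. Qed.

Lemma prodn_zero f a n i : (a <= i < a + n)%nat -> f i = 0 -> prodn f a n = 0.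
Proof. revert a; induction n; intros a Hi H; simpl. lia.
  destruct (Nat.eq_dec a i). subst; rewrite H; ring.
  rewrite (IHn (S a)); [ring|lia|auto]. Qed.

Lemma prodn_scale f g c a n : (forall i, (a <= i < a + n)%nat -> g i = c * f i) -> prodn g a n = c ^ n * prodn f a n.
Proof. revert a; induction n; intros a H; simpl. ring.
  rewrite (H a) by lia. rewrite (IHn (S a)). ring. intros; apply H; lia. Qed.

Lemma prodn_upd f g c a n k : (a <= k < a + n)%nat -> g k = c * f k ->
  (forall i, (a <= i < a + n)%nat -> i <> k -> g i = f i) -> prodn g a n = c * prodn f a n.
Proof. revert a; induction n; intros a Hk Hg H; simpl. lia.
  destruct (Nat.eq_dec a k). subst. rewrite Hg. rewrite (prodn_ext g f); [ring|].
  intros; apply H; lia.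
  rewrite (H a) by lia. rewrite (IHn (S a)); [ring|lia|auto|]. intros; apply H; lia. Qed.

Lemma prodn_const c a n : prodn (fun _ => c) a n = c ^ n.
Proof. revert a; induction n; intros; simpl; auto. rewrite IHn; auto. Qed.

Lemma pow_lt_strict x y n : 0 <= x < y -> (1 <= n)%nat -> x ^ n < y ^ n.
Proof. intros H Hn. induction n. lia. destruct n. simpl; lra.
  simpl in *. assert (0 <= x * x ^ n). { apply Rmult_le_pos; [lra|apply pow_le; lra]. }
  assert (x * x ^ n < y * y ^ n) by (apply IHn; lia).
  apply Rle_lt_trans with (x * (y * y ^ n)). apply Rmult_le_compat_l; lra.
  apply Rmult_lt_compat_r; [|lra]. lra. Qed.

Lemma pow_le_inv x y n : 0 <= x -> 0 <= y -> (1 <= n)%nat -> x ^ n <= y ^ n -> x <= y.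
Proof. intros. destruct (Rle_lt_dec x y); auto. assert (y ^ n < x ^ n) by (apply pow_lt_strict; auto; lra). lra. Qed.

Lemma bernoulli t n : -1 <= t -> 1 + INR n * t <= (1 + t) ^ n.
Proof. intros Ht. induction n. simpl; lra. rewrite S_INR. change ((1+t)^(S n)) with ((1+t) * (1+t)^n).
  assert (0 <= INR n) by apply pos_INR.
  apply Rle_trans with ((1+t) * (1 + INR n * t)). nra. apply Rmult_le_compat_l; lra. Qed.

Lemma Rpower_nonpos x y : x <= 0 -> Rpower x y = 1.
Proof. intros. unfold Rpower. replace (ln x) with 0. rewrite Rmult_0_r; apply exp_0.
  unfold ln. destruct (Rlt_dec 0 x) as [h|h]. exfalso; lra. reflexivity. Qed.

Lemma Rpower_root x m : 0 < x -> (1 <= m)%nat -> Rpower x (/ INR m) ^ m = x.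
Proof. intros. rewrite <- Rpower_pow by (unfold Rpower; apply exp_pos).
  rewrite Rpower_mult. rewrite Rinv_l. apply Rpower_1; auto. apply not_0_INR; lia. Qed.

Lemma Rpower_pos x y : 0 < Rpower x y.
Proof. unfold Rpower; apply exp_pos. Qed.

Definition Vb d (P : box) j := prodn (fst P) 1 (j-1) * prodn (snd P) j (d-j+1).

Lemma delta_eq d eps P j : delta d eps P j = Rpower ((prodd d (snd P) - eps) / Vb d P j) (/ INR (d - j + 1)).
Proof. destruct P; reflexivity. Qed.

Lemma child_fst d eps P j k i : (k <= d)%nat ->
  fst (child d eps P j k) i = if (i <? k)%nat then gamma d eps P j i else fst P i.
Proof. intros. unfold child. replace (k <=? d)%nat with true by (symmetry; apply Nat.leb_le; auto). reflexivity. Qed.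

Lemma child_snd d eps P j k i : (k <= d)%nat ->
  snd (child d eps P j k) i = if (i =? k)%nat then gamma d eps P j i else snd P i.
Proof. intros. unfold child. replace (k <=? d)%nat with true by (symmetry; apply Nat.leb_le; auto). reflexivity. Qed.

Lemma gamma_lo d eps P j i : (i < j)%nat -> gamma d eps P j i = fst P i.
Proof. intros. unfold gamma. replace (i <? j)%nat with true by (symmetry; apply Nat.ltb_lt; auto). auto. Qed.

Lemma gamma_mid d eps P j i : (j <= i <= d)%nat -> gamma d eps P j i = delta d eps P j * snd P i.
Proof. intros. unfold gamma. replace (i <? j)%nat with false by (symmetry; apply Nat.ltb_ge; lia).
  replace (i <=? d)%nat with true by (symmetry; apply Nat.leb_le; lia). auto. Qed.

Definition good3 d (P : box) j :=
  (forall i, (j <= i <= d)%nat -> fst P i = 0) /\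
  (forall i, (1 <= i < j)%nat -> 0 < fst P i) /\
  (forall i, (1 <= i <= d)%nat -> 0 < snd P i).

Lemma W_eq d P j : (1 <= j <= d)%nat -> (forall i, (j <= i <= d)%nat -> fst P i = 0) ->
  W d P = prodd d (snd P).
Proof. intros Hj H. unfold W, prodd. destruct P as [al be]; simpl in *. rewrite (prodn_zero al 1 d d); [ring|lia|apply H; lia]. Qed.

Lemma child_W d eps P j k : (1 <= j <= k)%nat -> (k <= d)%nat -> (forall i, (j <= i <= d)%nat -> fst P i = 0) ->
  W d (child d eps P j k) = delta d eps P j * W d P.
Proof. intros Hj Hk H. rewrite (W_eq d P j); [|lia|auto].
  rewrite (W_eq d _ k). unfold prodd. apply prodn_upd with k. lia.
  rewrite child_snd by auto. rewrite Nat.eqb_refl. apply gamma_mid; lia.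
  intros i Hi Hik. rewrite child_snd by auto. replace (i =? k)%nat with false by (symmetry; apply Nat.eqb_neq; auto). auto.
  lia. intros i Hi. rewrite child_fst by lia. replace (i <? k)%nat with false by (symmetry; apply Nat.ltb_ge; lia). apply H; lia. Qed.

Lemma child_good3 d eps P j k : (1 <= j <= k)%nat -> (k <= d)%nat -> good3 d P j -> good3 d (child d eps P j k) k.
Proof. intros Hj Hk [G1 [G2 G3]]. assert (Hd : 0 < delta d eps P j) by (rewrite delta_eq; apply Rpower_pos).
  split; [|split].
  - intros i Hi. rewrite child_fst by auto. replace (i <? k)%nat with false by (symmetry; apply Nat.ltb_ge; lia). apply G1; lia.
  - intros i Hi. rewrite child_fst by auto. replace (i <? k)%nat with true by (symmetry; apply Nat.ltb_lt; lia).
    destruct (Nat.lt_ge_cases i j). rewrite gamma_lo by auto. apply G2; lia.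
    rewrite gamma_mid by lia. apply Rmult_lt_0_compat; auto. apply G3; lia.
  - intros i Hi. rewrite child_snd by auto. destruct (Nat.eqb_spec i k). subst.
    rewrite gamma_mid by lia. apply Rmult_lt_0_compat; auto. apply G3; lia. Qed.

Lemma Vb_pos d P j : (1 <= j <= d)%nat -> good3 d P j -> 0 < Vb d P j.
Proof. intros Hj [G1 [G2 G3]]. unfold Vb. apply Rmult_lt_0_compat; apply prodn_pos; intros; [apply G2|apply G3]; lia. Qed.

Lemma child_Vb d eps P j k : (1 <= j <= k)%nat -> (k <= d)%nat ->
  Vb d (child d eps P j k) k = delta d eps P j ^ (k - j + 1) * Vb d P j.
Proof. intros Hj Hk. unfold Vb. set (de := delta d eps P j).
  replace (k - 1)%nat with ((j-1) + (k-j))%nat by lia.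
  rewrite prodn_split. replace (1 + (j-1))%nat with j by lia.
  rewrite (prodn_ext _ (fst P) 1 (j-1)).
  rewrite (prodn_scale (snd P) _ de j (k-j)).
  rewrite (prodn_upd (snd P) _ de k (d-k+1) k); try lia.
  replace (d - j + 1)%nat with ((k-j) + (d-k+1))%nat by lia. rewrite (prodn_split (snd P) j (k-j) (d-k+1)).
  replace (j + (k-j))%nat with k by lia. rewrite pow_add. simpl. ring.
  rewrite child_snd by auto. rewrite Nat.eqb_refl. apply gamma_mid; lia.
  intros i Hi Hik. rewrite child_snd by auto. replace (i =? k)%nat with false by (symmetry; apply Nat.eqb_neq; auto). auto.
  intros i Hi. rewrite child_fst by auto. replace (i <? k)%nat with true by (symmetry; apply Nat.ltb_lt; lia). apply gamma_mid; lia.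
  intros i Hi. rewrite child_fst by auto. replace (i <? k)%nat with true by (symmetry; apply Nat.ltb_lt; lia). apply gamma_lo; lia.
Qed.

Lemma step_alg (d j k : nat) (Wv V de eps : R) :
  (1 <= j <= k)%nat -> (k <= d)%nat -> 0 < eps -> 0 < de -> 0 < V ->
  de ^ (d - j + 1) * V = Wv - eps -> Wv ^ (d - j + 1) * (Wv - eps) ^ (j - 1) <= V ^ d -> eps < Wv ->
  de ^ d * Wv <= Wv - eps /\
  (eps < de * Wv -> (de * Wv) ^ (d - k + 1) * (de * Wv - eps) ^ (k - 1) <= (de ^ (k - j + 1) * V) ^ d).
Proof.
  intros Hj Hk He Hde HV Hdel Hinv HW.
  set (a := (j-1)%nat). set (b := (k-j)%nat). set (n := (d-k)%nat).
  assert (Hd : d = (a+b+n+1)%nat) by (unfold a,b,n; lia).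
  replace (d - j + 1)%nat with (b+n+1)%nat in * by (unfold a,b,n; lia).
  replace (j - 1)%nat with a in * by reflexivity.
  replace (k - j + 1)%nat with (b+1)%nat by (unfold b; lia).
  replace (d - k + 1)%nat with (n+1)%nat by (unfold n; lia).
  replace (k - 1)%nat with (a+b)%nat by (unfold a,b; lia).
  clearbody a b n. subst d.
  set (m := (b+n+1)%nat) in *.
  assert (Hwe : 0 < Wv - eps) by lra.
  assert (Hkey : (de ^ m * V) ^ (a+b+n+1) = (Wv - eps) ^ (a+b+n+1)) by (rewrite Hdel; auto).
  assert (P1 : de ^ (a+b+n+1) * Wv <= Wv - eps).
  { apply (pow_le_inv _ _ m). apply Rmult_le_pos; [apply pow_le|]; lra. lra. unfold m; lia.
    apply Rmult_le_reg_r with ((Wv - eps) ^ a). apply pow_lt; lra.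
    replace ((Wv - eps) ^ m * (Wv - eps) ^ a) with ((Wv - eps) ^ (a+b+n+1)).
    2:{ rewrite <- pow_add. f_equal. unfold m; lia. }
    rewrite <- Hkey. rewrite !Rpow_mult_distr. rewrite <- !pow_mult.
    replace ((a+b+n+1) * m)%nat with (m * (a+b+n+1))%nat by lia.
    rewrite Rmult_assoc. apply Rmult_le_compat_l. apply pow_le; lra. auto. }
  split; auto.
  intros HQ.
  assert (Hde1 : de <= 1).
  { destruct (Rle_lt_dec de 1); auto. assert (1 <= de ^ (a+b+n+1)).
    { replace 1 with (1 ^ (a+b+n+1)) by apply pow1. apply pow_incr; lra. } nra. }
  assert (HQ2 : 0 <= de * Wv - eps <= de * (Wv - eps)) by nra.
  apply Rmult_le_reg_l with (de ^ (n * (a+b+n+1))). apply pow_lt; lra.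
  assert (E1 : de ^ (n * (a+b+n+1)) * (de ^ (b+1) * V) ^ (a+b+n+1) = (Wv - eps) ^ (a+b+n+1)).
  { rewrite <- Hkey. rewrite !Rpow_mult_distr, <- !pow_mult. rewrite <- Rmult_assoc, <- pow_add.
    f_equal. f_equal. unfold m. nia. }
  rewrite E1.
  apply Rle_trans with (de ^ (n * (a+b+n+1)) * ((de * Wv) ^ (n + 1) * (de * (Wv - eps)) ^ (a + b))).
  { apply Rmult_le_compat_l. apply pow_le; lra. apply Rmult_le_compat_l.
    apply pow_le; nra. apply pow_incr; lra. }
  replace (de ^ (n * (a+b+n+1)) * ((de * Wv) ^ (n + 1) * (de * (Wv - eps)) ^ (a + b)))
    with ((de ^ (a+b+n+1) * Wv) ^ (n+1) * (Wv - eps) ^ (a+b)).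
  2:{ rewrite !Rpow_mult_distr, <- !pow_mult.
      replace ((a+b+n+1) * (n+1))%nat with (n * (a+b+n+1) + (n+1) + (a+b))%nat by nia.
      rewrite !pow_add. ring. }
  replace ((Wv - eps) ^ (a+b+n+1)) with ((Wv - eps) ^ (n+1) * (Wv - eps) ^ (a+b)).
  2:{ rewrite <- pow_add. f_equal. lia. }
  apply Rmult_le_compat_r. apply pow_le; lra. apply pow_incr. split; auto.
  apply Rmult_le_pos; [apply pow_le|]; lra.
Qed.

Definition goodI d eps (P : box) j := good3 d P j /\
  (eps < W d P -> W d P ^ (d-j+1) * (W d P - eps) ^ (j-1) <= Vb d P j ^ d).

Lemma delta_pow d eps P j : (1 <= j <= d)%nat -> good3 d P j -> eps < W d P ->
  delta d eps P j ^ (d-j+1) * Vb d P j = W d P - eps.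
Proof. intros Hj G HW. pose proof (Vb_pos d P j Hj G) as HV.
  destruct G as [G1 G23]. rewrite (W_eq d P j Hj G1) in *.
  rewrite delta_eq. rewrite Rpower_root. unfold Rdiv; rewrite Rmult_assoc, Rinv_l; [rewrite Rmult_1_r; reflexivity|lra].
  unfold Rdiv; apply Rmult_lt_0_compat; [apply Rlt_Rminus; exact HW|apply Rinv_0_lt_compat; lra]. lia. Qed.

Lemma child_goodI d eps P j k : 0 < eps -> (1 <= j <= k)%nat -> (k <= d)%nat -> goodI d eps P j -> eps < W d P ->
  goodI d eps (child d eps P j k) k /\ delta d eps P j ^ d * W d P <= W d P - eps.
Proof. intros He Hjk Hk [G I] HW.
  assert (Hj : (1 <= j <= d)%nat) by lia.
  pose proof (Vb_pos d P j Hj G) as HV.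
  pose proof (delta_pow d eps P j Hj G HW) as Hdp.
  assert (Hde : 0 < delta d eps P j) by (rewrite delta_eq; apply Rpower_pos).
  destruct (step_alg d j k (W d P) (Vb d P j) (delta d eps P j) eps Hjk Hk He Hde HV Hdp (I HW) HW) as [S1 S2].
  split; auto. split. apply child_good3; auto.
  destruct G as [G1 _].
  rewrite (child_W d eps P j k) by auto. rewrite child_Vb by auto. auto. Qed.

Definition F d eps w := w * Rpower ((w - eps) / w) (/ INR d).

Lemma F_root d eps w : (1 <= d)%nat -> 0 < eps < w -> Rpower ((w - eps) / w) (/ INR d) ^ d = (w - eps) / w.
Proof. intros. apply Rpower_root; auto. apply Rdiv_lt_0_compat; lra. Qed.

Lemma child_le_F d eps P j k : 0 < eps -> (1 <= j <= k)%nat -> (k <= d)%nat -> goodI d eps P j -> eps < W d P ->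
  W d (child d eps P j k) <= F d eps (W d P).
Proof. intros He Hjk Hk G HW. destruct (child_goodI d eps P j k He Hjk Hk G HW) as [_ H].
  destruct G as [[G1 _] _]. rewrite (child_W d eps P j k) by auto. unfold F.
  rewrite (Rmult_comm (W d P)). apply Rmult_le_compat_r. lra.
  apply (pow_le_inv _ _ d). left; rewrite delta_eq; apply Rpower_pos. left; apply Rpower_pos. lia.
  rewrite F_root by (lia||lra). apply Rmult_le_reg_r with (W d P). lra.
  unfold Rdiv. rewrite Rmult_assoc, Rinv_l by lra. lra. Qed.

Lemma F_mono d eps w1 w2 : (1 <= d)%nat -> 0 < eps < w1 -> w1 <= w2 -> F d eps w1 <= F d eps w2.
Proof. intros Hd H1 H2. unfold F. apply Rmult_le_compat. lra. left; apply Rpower_pos. lra.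
  apply (pow_le_inv _ _ d). left; apply Rpower_pos. left; apply Rpower_pos. lia.
  rewrite !F_root by (lia||lra).
  unfold Rdiv. rewrite !Rmult_minus_distr_r, !Rinv_r by lra.
  assert (/ w2 <= / w1) by (apply Rinv_le_contravar; lra). nra. Qed.

Lemma F_dec d eps w : (1 <= d)%nat -> 0 < eps < w -> F d eps w <= w - eps / INR d.
Proof. intros Hd H. assert (HD : 1 <= INR d) by (replace 1 with (INR 1) by reflexivity; apply le_INR; lia).
  unfold F. set (r := Rpower _ _).
  assert (r <= 1 - eps / (INR d * w)).
  { apply (pow_le_inv _ _ d). left; apply Rpower_pos.
    assert (eps / (INR d * w) <= eps / w).
    { unfold Rdiv. apply Rmult_le_compat_l. lra. apply Rinv_le_contravar. lra. nra. }
    assert (eps / w < 1). { apply Rmult_lt_reg_r with w. lra. unfold Rdiv; rewrite Rmult_assoc, Rinv_l; lra. }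
    lra. lia.
    unfold r; rewrite F_root by (lia||lra).
    eapply Rle_trans; [|apply bernoulli].
    replace (1 + INR d * - (eps / (INR d * w))) with ((w - eps) / w). lra.
    field. split; lra.
    assert (eps / (INR d * w) <= eps / w).
    { unfold Rdiv. apply Rmult_le_compat_l. lra. apply Rinv_le_contravar. lra. nra. }
    assert (eps / w < 1). { apply Rmult_lt_reg_r with w. lra. unfold Rdiv; rewrite Rmult_assoc, Rinv_l; lra. }
    lra. }
  apply Rle_trans with (w * (1 - eps / (INR d * w))). apply Rmult_le_compat_l; lra.
  right. field. split; lra. Qed.

Lemma F_id d eps w : 0 < w <= eps -> F d eps w = w.
Proof. intros. unfold F. rewrite Rpower_nonpos. ring. unfold Rdiv.
  assert (0 < / w) by (apply Rinv_0_lt_compat; lra). nra. Qed.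

Lemma F_pos d eps w : 0 < w -> 0 < F d eps w.
Proof. intros. unfold F. apply Rmult_lt_0_compat; auto. apply Rpower_pos. Qed.

Fixpoint itF d eps n w := match n with O => w | S n' => itF d eps n' (F d eps w) end.

Lemma itF_S d eps n w : itF d eps (S n) w = F d eps (itF d eps n w).
Proof. revert w; induction n; intros; simpl; auto. rewrite <- IHn. reflexivity. Qed.

Lemma dominate d eps l : (1 <= d)%nat -> 0 < eps -> forall P j w, goodI d eps P j -> (1 <= j <= d)%nat ->
  path_ok d eps P j l -> W d P <= w -> W d (Qfrom d eps P j l) <= itF d eps (length l) w.
Proof. intros Hd He. induction l as [|k l IH]; intros P j w G Hj Hp Hw; simpl in *; auto.
  destruct Hp as [HW [Hk Hp]]. apply (IH (child d eps P j k) k); auto.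
  apply (child_goodI d eps P j k); auto; lia. lia.
  apply Rle_trans with (F d eps (W d P)). apply child_le_F; auto; lia.
  apply F_mono; auto; lra. Qed.

Lemma W_Id d : (1 <= d)%nat -> W d Id = 1.
Proof. intros. unfold W, prodd, Id; simpl. rewrite !prodn_const. rewrite pow1.
  destruct d. lia. simpl. ring. Qed.

Lemma goodI_Id d eps : (1 <= d)%nat -> goodI d eps Id 1.
Proof. intros Hd. split. split; [|split]; intros; simpl; first [lra|lia].
  intros _. rewrite W_Id by auto. unfold Vb, Id; simpl. rewrite prodn_const. cbv beta.
  rewrite !pow1, Rmult_1_l, pow1. simpl. lra. Qed.

Lemma delta1 d eps P : (1 <= d)%nat -> (forall i, (1 <= i <= d)%nat -> fst P i = 0) ->
  delta d eps P 1 = Rpower ((W d P - eps) / W d P) (/ INR d).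
Proof. intros Hd G. rewrite delta_eq. rewrite (W_eq d P 1) by (auto;lia).
  unfold Vb. simpl prodn. replace (d - 1 + 1)%nat with d by lia. unfold prodd. rewrite Rmult_1_l. reflexivity. Qed.

Lemma ones_W d eps n : (1 <= d)%nat -> forall P, (forall i, (1 <= i <= d)%nat -> fst P i = 0) ->
  W d (Qfrom d eps P 1 (repeat 1%nat n)) = itF d eps n (W d P).
Proof. intros Hd. induction n; intros P G; simpl; auto.
  rewrite IHn. f_equal. rewrite child_W by (auto; lia). rewrite delta1 by auto. unfold F. ring.
  intros i Hi. rewrite child_fst by lia. replace (i <? 1)%nat with false by (symmetry; apply Nat.ltb_ge; lia). auto. Qed.

Lemma ones_ok d eps n : (1 <= d)%nat -> forall P, (forall i, (1 <= i <= d)%nat -> fst P i = 0) ->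
  (forall r, (r < n)%nat -> eps < itF d eps r (W d P)) -> path_ok d eps P 1 (repeat 1%nat n).
Proof. intros Hd. induction n; intros P G H; simpl; auto.
  split. apply (H 0%nat); lia. split. lia. apply IHn.
  intros i Hi. rewrite child_fst by lia. replace (i <? 1)%nat with false by (symmetry; apply Nat.ltb_ge; lia). auto.
  intros r Hr. rewrite child_W by (auto; lia). rewrite delta1 by auto.
  replace (Rpower ((W d P - eps) / W d P) (/ INR d) * W d P) with (F d eps (W d P)) by (unfold F; ring).
  apply (H (S r)). lia. Qed.

Lemma itF_pos d eps n w : 0 < w -> 0 < itF d eps n w.
Proof. revert w; induction n; intros; simpl; auto. apply IHn, F_pos; auto. Qed.

Lemma itF_stay d eps n w : 0 < w -> itF d eps n w <= eps -> forall m, (n <= m)%nat -> itF d eps m w <= eps.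
Proof. intros Hw H m Hm. induction Hm; auto. rewrite itF_S. rewrite F_id; auto. split; auto. apply itF_pos; auto. Qed.

Lemma itF_dec d eps r : (1 <= d)%nat -> 0 < eps -> itF d eps r 1 <= eps \/ itF d eps r 1 <= 1 - INR r * eps / INR d.
Proof. intros Hd He. induction r. right. simpl. unfold Rdiv. lra.
  rewrite itF_S. destruct (Rle_lt_dec (itF d eps r 1) eps).
  left. rewrite F_id; auto. split; auto. apply itF_pos; lra.
  destruct IHr. lra. right. eapply Rle_trans. apply F_dec; auto. rewrite S_INR. unfold Rdiv in *. lra. Qed.

Lemma min_search (Pp : nat -> Prop) (dec : forall n, {Pp n} + {~ Pp n}) N :
  (forall r, (r < N)%nat -> ~ Pp r) \/ (exists h, (h < N)%nat /\ Pp h /\ forall r, (r < h)%nat -> ~ Pp r).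
Proof. induction N. left; intros; lia.
  destruct IHN as [H|[h [H1 H2]]]. destruct (dec N). right. exists N; split; auto.
  left. intros r Hr. destruct (Nat.eq_dec r N). subst; auto. apply H; lia.
  right. exists h; split; auto. Qed.

Lemma ceil_props x : 0 <= x -> (0 <= ceilR x)%Z /\ x <= IZR (ceilR x) /\ IZR (ceilR x) < x + 1.
Proof. intros Hx. unfold ceilR. destruct (archimed (- x)) as [A1 A2].
  rewrite minus_IZR. assert (x <= 1 - IZR (up (- x))) by lra. split; [|lra].
  apply le_IZR. rewrite minus_IZR. simpl. lra. Qed.

Fixpoint lastT (j : nat) (l : list nat) : nat := match l with nil => j | k :: l' => lastT k l' end.

Fixpoint path_ok2 d eps (P : box) (j : nat) (l : list nat) : Prop :=
  match l with
  | nil => True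
  | k :: l' => W d P > eps /\ (j <= d)%nat /\ (j <= k <= d + 1)%nat /\ path_ok2 d eps (child d eps P j k) k l'
  end.

Lemma Qfrom_app d eps l : forall P j k, Qfrom d eps P j (l ++ k :: nil) = child d eps (Qfrom d eps P j l) (lastT j l) k.
Proof. induction l; intros; simpl; auto. Qed.

Lemma path_ok2_app d eps l : forall P j k, path_ok2 d eps P j l -> W d (Qfrom d eps P j l) > eps ->
  (lastT j l <= d)%nat -> (lastT j l <= k <= d + 1)%nat -> path_ok2 d eps P j (l ++ k :: nil).
Proof. induction l; intros P j k H1 H2 H3 H4; simpl in *. repeat split; auto; lia.
  destruct H1 as [A [B [C D]]]. repeat split; auto; lia. Qed.

Lemma lastT_app l : forall j k, lastT j (l ++ k :: nil) = k.
Proof. induction l; intros; simpl; auto. Qed.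

Lemma gen_path d eps P j : generated d eps P j ->
  exists l, path_ok2 d eps Id 1 l /\ Qfrom d eps Id 1 l = P /\ lastT 1 l = j.
Proof. induction 1. exists nil; simpl; auto.
  destruct IHgenerated as [l [A [B C]]]. exists (l ++ k :: nil). split; [|split].
  apply path_ok2_app; auto. rewrite B; auto. lia. lia.
  rewrite Qfrom_app, B, C; auto.
  apply lastT_app. Qed.

Lemma path_ok2_split d eps s : forall P j k, path_ok2 d eps P j (s ++ k :: nil) ->
  path_ok d eps P j s /\ W d (Qfrom d eps P j s) > eps.
Proof. induction s; intros P j k H; simpl in *. tauto.
  destruct H as [A [B [C D]]]. destruct (IHs _ _ _ D) as [E F]. split; auto.
  repeat split; auto; try lia. destruct s; simpl in D; lia. Qed.

Fixpoint tree d eps (f : nat) (P : box) (j : nat) : list box :=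
  match f with
  | O => P :: nil
  | S f' => if (j <=? d)%nat then
              (if Rlt_dec eps (W d P) then flat_map (fun k => tree d eps f' (child d eps P j k) k) (seq j (d+2-j))
               else P :: nil)
            else P :: nil
  end.

Lemma tree_in d eps l : forall Q j f, path_ok2 d eps Q j l -> (length l <= f)%nat ->
  (lastT j l = (d+1)%nat \/ W d (Qfrom d eps Q j l) <= eps) -> In (Qfrom d eps Q j l) (tree d eps f Q j).
Proof. induction l; intros Q j f H1 H2 H3; simpl in *.
  - destruct f; simpl; auto. destruct (j <=? d)%nat eqn:E. apply Nat.leb_le in E.
    destruct (Rlt_dec eps (W d Q)). destruct H3; [lia|lra]. simpl; auto. simpl; auto.
  - destruct H1 as [A [B [C D]]]. destruct f. lia. simpl.
    replace (j <=? d)%nat with true by (symmetry; apply Nat.leb_le; auto).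
    destruct (Rlt_dec eps (W d Q)); [|lra]. apply in_flat_map. exists a. split.
    apply in_seq. lia. apply IHl; auto. lia. Qed.

Fixpoint cntR d (f : nat) (j : nat) : R :=
  match f with
  | O => 1
  | S f' => fold_right Rplus 0 (map (fun k => cntR d f' k) (seq j (d+2-j)))
  end.

Lemma sum_nonneg (c : nat -> R) xs : (forall x, In x xs -> 0 <= c x) -> 0 <= fold_right Rplus 0 (map c xs).
Proof. induction xs; intros H; simpl. lra. assert (0 <= c a) by (apply H; simpl; auto).
  assert (0 <= fold_right Rplus 0 (map c xs)) by (apply IHxs; intros; apply H; simpl; auto). lra. Qed.

Lemma cntR_ge1 d f : forall j, (j <= d + 1)%nat -> 1 <= cntR d f j.
Proof. induction f; intros j Hj; simpl. lra.
  replace (d + 2 - j)%nat with (S (d + 1 - j)) by lia. simpl.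
  assert (1 <= cntR d f j) by (apply IHf; lia).
  assert (0 <= fold_right Rplus 0 (map (fun k => cntR d f k) (seq (S j) (d + 1 - j)))).
  { apply sum_nonneg. intros x Hx. apply in_seq in Hx. assert (1 <= cntR d f x) by (apply IHf; lia). lra. }
  lra. Qed.

Lemma len_flat_map (g : nat -> list box) (c : nat -> R) xs : (forall x, In x xs -> INR (length (g x)) <= c x) ->
  INR (length (flat_map g xs)) <= fold_right Rplus 0 (map c xs).
Proof. induction xs; intros H; simpl. lra. rewrite length_app, plus_INR.
  assert (INR (length (g a)) <= c a) by (apply H; simpl; auto).
  assert (INR (length (flat_map g xs)) <= fold_right Rplus 0 (map c xs)) by (apply IHxs; intros; apply H; simpl; auto). lra. Qed.

Lemma tree_len d eps f : forall P j, (j <= d + 1)%nat -> INR (length (tree d eps f P j)) <= cntR d f j.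
Proof. induction f; intros P j Hj; simpl. lra.
  destruct (j <=? d)%nat. destruct (Rlt_dec eps (W d P)).
  apply len_flat_map. intros x Hx. apply in_seq in Hx. apply IHf. lia.
  simpl. replace (d + 2 - j)%nat with (S (d + 1 - j)) by lia. simpl.
  pose proof (cntR_ge1 d f j Hj).
  assert (0 <= fold_right Rplus 0 (map (fun k => cntR d f k) (seq (S j) (d + 1 - j)))).
  { apply sum_nonneg. intros x Hx. apply in_seq in Hx. assert (1 <= cntR d f x) by (apply cntR_ge1; lia). lra. }
  lra.
  simpl. replace (d + 2 - j)%nat with (S (d + 1 - j)) by lia. simpl.
  pose proof (cntR_ge1 d f j Hj).
  assert (0 <= fold_right Rplus 0 (map (fun k => cntR d f k) (seq (S j) (d + 1 - j)))).
  { apply sum_nonneg. intros x Hx. apply in_seq in Hx. assert (1 <= cntR d f x) by (apply cntR_ge1; lia). lra. }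
  lra. Qed.

Lemma C_nn n : C n n = 1.
Proof. unfold C. rewrite Nat.sub_diag. simpl. field. apply INR_fact_neq_0. Qed.

Lemma C_n0 n : C n 0 = 1.
Proof. unfold C. rewrite Nat.sub_0_r. simpl. field. apply INR_fact_neq_0. Qed.

Lemma fr_cons (g : nat -> R) x xs : fold_right Rplus 0 (map g (x :: xs)) = g x + fold_right Rplus 0 (map g xs).
Proof. reflexivity. Qed.

Lemma cntR_closed d f : forall j, (j <= d + 1)%nat -> cntR d f j = C (f + (d + 1 - j)) (d + 1 - j).
Proof. induction f; intros j Hj. simpl. rewrite C_nn; auto.
  simpl cntR. replace (d + 2 - j)%nat with (S (d + 1 - j)) by lia.
  assert (forall n j, (j + n = d + 1)%nat -> fold_right Rplus 0 (map (fun k => cntR d f k) (seq j (S n))) = C (S f + n) n).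
  { clear j Hj. induction n; intros j Hjn.
    simpl. rewrite IHf by lia. replace (d + 1 - j)%nat with 0%nat by lia. rewrite !C_n0. ring.
    change (seq j (S (S n))) with (j :: seq (S j) (S n)).
    rewrite (fr_cons (fun k => cntR d f k) j (seq (S j) (S n))).
    rewrite IHn by lia. rewrite IHf by lia. replace (d + 1 - j)%nat with (S n) by lia.
    replace (S f + n)%nat with (f + S n)%nat by lia. replace (S f + S n)%nat with (S (f + S n)) by lia.
    rewrite <- pascal by lia. ring. }
  apply H. lia. Qed.

Fixpoint Pr (c : R) (n : nat) : R := match n with O => 1 | S n' => c * Pr (c + 1) n' end.

Lemma Pr_S n : forall c, Pr c (S n) = Pr c n * (c + INR n).
Proof. induction n; intros c. simpl. ring. change (Pr c (S (S n))) with (c * Pr (c+1) (S n)).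
  rewrite IHn. simpl Pr. rewrite S_INR. ring. Qed.

Lemma Pr_nonneg n : forall c, 0 <= c -> 0 <= Pr c n.
Proof. induction n; intros; simpl. lra. apply Rmult_le_pos; auto. apply IHn; lra. Qed.

Lemma fact_Pr h n : INR (fact (h + n)) = INR (fact h) * Pr (INR h + 1) n.
Proof. induction n. rewrite Nat.add_0_r; simpl; ring.
  replace (h + S n)%nat with (S (h + n)) by lia. rewrite Pr_S. change (fact (S (h+n))) with (S (h+n) * fact (h+n))%nat. rewrite mult_INR, IHn.
  rewrite S_INR, plus_INR. ring. Qed.

Lemma Pr_amgm n : forall c, 0 <= c -> Pr c n <= (c + (INR n - 1) / 2) ^ n.
Proof. induction n as [n IHn] using lt_wf_ind. intros c Hc.
  destruct n. simpl; lra. destruct n. simpl. lra.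
  change (Pr c (S (S n))) with (c * Pr (c+1) (S n)). rewrite Pr_S.
  assert (H := IHn n ltac:(lia) (c+1) ltac:(lra)).
  set (m := c + (INR (S (S n)) - 1) / 2).
  assert (Em : c + 1 + (INR n - 1) / 2 = m) by (unfold m; rewrite !S_INR; field).
  rewrite Em in H.
  assert (c * (c + 1 + INR n) <= m * m).
  { assert (E2 : m * m - c * (c + 1 + INR n) = ((INR n + 1)/2) * ((INR n + 1)/2)) by (unfold m; rewrite !S_INR; field).
    pose proof (Rle_0_sqr ((INR n + 1)/2)). unfold Rsqr in *. lra. }
  assert (0 <= Pr (c+1) n) by (apply Pr_nonneg; lra).
  assert (0 <= c * (c + 1 + INR n)) by (pose proof (pos_INR n); nra).
  replace (c * (Pr (c + 1) n * (c + 1 + INR n))) with (Pr (c+1) n * (c * (c + 1 + INR n))) by ring.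
  change (m ^ (S (S n))) with (m * (m * m ^ n)).
  replace (m * (m * m ^ n)) with (m ^ n * (m * m)) by ring.
  apply Rmult_le_compat; auto. Qed.

Lemma C_Pr h d : C (h + d) d = Pr (INR h + 1) d / INR (fact d).
Proof. unfold C. replace (h + d - d)%nat with h by lia. rewrite fact_Pr. field.
  split; apply INR_fact_neq_0. Qed.

Theorem mainTheorem3 (d : nat) (eps : R) :
  (1 <= d)%nat -> 0 < eps <= 1 ->
  (exists h : nat,
      is_height d eps h /\
      W d (Qidx d eps (repeat 1%nat h)) <= eps /\
      (forall r : nat, (r < h)%nat -> W d (Qidx d eps (repeat 1%nat r)) > eps) /\
      (Z.of_nat h <= ceilR (INR d * (/ eps - 1)))%Z) /\
  (d = 2%nat ->
     forall L : list box, NoDup L -> (forall P, In P L -> leaf d eps P) ->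
       INR (length L) <= 2 * (/ eps + / 2) * / eps) /\
  ((3 <= d)%nat ->
     forall L : list box, NoDup L -> (forall P, In P L -> leaf d eps P) ->
       INR (length L) <=
         INR d ^ d / INR (fact d) * (/ eps - / 2 * (1 - 3 / INR d)) ^ d) /\
  ((3 <= d)%nat ->
     INR d ^ d / INR (fact d) * (/ eps - / 2 * (1 - 3 / INR d)) ^ d
       <= INR d ^ d / INR (fact d) * (/ eps) ^ d).
Proof.
  intros Hd He.
  assert (HD : 1 <= INR d) by (replace 1 with (INR 1) by reflexivity; apply le_INR; lia).
  assert (Hy : 1 <= / eps). { rewrite <- Rinv_1. apply Rinv_le_contravar; lra. }
  set (y := / eps) in *.
  assert (Hey : eps * y = 1) by (unfold y; field; lra).
  set (x := INR d * (y - 1)).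
  assert (Hx : 0 <= x) by (unfold x; nra).
  destruct (ceil_props x Hx) as [Z0 [Zx Zx1]].
  set (N := Z.to_nat (ceilR x)).
  assert (HN : INR N = IZR (ceilR x)) by (unfold N; rewrite INR_IZR_INZ, Z2Nat.id; auto).
  assert (HitN : itF d eps N 1 <= eps).
  { destruct (itF_dec d eps N Hd ltac:(lra)); auto.
    assert (INR N * eps / INR d >= 1 - eps).
    { unfold Rdiv. apply Rle_ge. apply Rmult_le_reg_r with (INR d). lra.
      rewrite Rmult_assoc, Rinv_l by lra. rewrite HN.
      assert (x * eps <= IZR (ceilR x) * eps) by (apply Rmult_le_compat_r; lra).
      assert (x * eps = INR d * (1 - eps)) by (unfold x; replace (INR d * (y - 1) * eps) with (INR d * (eps * y) - INR d * eps) by ring; rewrite Hey; ring).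
      lra. }
    lra. }
  destruct (min_search (fun r => itF d eps r 1 <= eps) (fun r => Rle_dec _ _) (S N)) as [H|[h [Hh1 [Hh2 Hh3]]]].
  { exfalso. apply (H N); auto. }
  assert (Hones : forall r, W d (Qidx d eps (repeat 1%nat r)) = itF d eps r 1).
  { intros r. unfold Qidx. rewrite ones_W; auto. rewrite W_Id; auto. }
  assert (Dom : forall l, idx_ok d eps l -> W d (Qidx d eps l) > eps -> (length l + 1 <= h)%nat).
  { intros l Hl HW. pose proof (dominate d eps l Hd ltac:(lra) Id 1%nat 1 (goodI_Id d eps Hd) ltac:(lia) Hl) as D.
    rewrite W_Id in D by auto. specialize (D (Rle_refl _)).
    destruct (Nat.lt_ge_cases (length l) h) as [A|A]. lia.
    exfalso. assert (itF d eps (length l) 1 <= eps) by (apply (itF_stay d eps h); auto; lra).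
    unfold Qidx in HW. lra. }
  assert (HhN : (h <= N)%nat) by lia.
  assert (Hhx : INR h < x + 1).
  { apply Rle_lt_trans with (INR N). apply le_INR; auto. lra. }
  assert (Leaves : forall L, NoDup L -> (forall P, In P L -> leaf d eps P) -> INR (length L) <= C (h + d) d).
  { intros L HL HP. apply Rle_trans with (INR (length (tree d eps h Id 1))).
    apply le_INR. apply NoDup_incl_length; auto. intros P HPL.
    destruct (HP P HPL) as [j [Hg Hj]]. destruct (gen_path d eps P j Hg) as [l [A [B C]]].
    rewrite <- B. apply tree_in; auto.
    destruct l as [|a l'] using rev_ind. simpl; lia.
    destruct (path_ok2_split d eps l' Id 1 a A) as [E F]. specialize (Dom l' E F).
    rewrite length_app; simpl; lia.
    rewrite C. rewrite B. auto.
    eapply Rle_trans. apply tree_len. lia. rewrite cntR_closed by lia.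
    replace (d + 1 - 1)%nat with d by lia. lra. }
  assert (Hfact : 0 < INR (fact d)) by (apply lt_0_INR, lt_O_fact).
  split; [|split; [|split]].
  - exists h. split; [|split; [|split]].
    + destruct (Rle_lt_dec (W d Id) eps) as [A|A].
      * left. split; auto. destruct h; auto. exfalso. apply (Hh3 0%nat). lia. simpl. rewrite W_Id in A; auto.
      * right. rewrite W_Id in A by auto. split. rewrite W_Id; auto.
        assert (h <> 0%nat) by (intro; subst; simpl in Hh2; lra).
        split. lia. split.
        exists (repeat 1%nat (h - 1)). split. apply repeat_length. split.
        unfold idx_ok. apply ones_ok; auto. intros r Hr. rewrite W_Id by auto.
        apply Rnot_le_lt. apply Hh3. lia.
        rewrite Hones. apply Rnot_le_lt. apply Hh3. lia.
        exact Dom.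
    + rewrite Hones; auto.
    + intros r Hr. rewrite Hones. apply Rnot_le_lt. apply Hh3. auto.
    + assert (Z.of_nat N = ceilR x) by (unfold N; rewrite Z2Nat.id; auto). lia.
  - intros E L HL HP. subst d. eapply Rle_trans. apply Leaves; auto.
    rewrite C_Pr. simpl Pr. simpl (INR (fact 2)). unfold x in Hhx. simpl INR in Hhx.
    pose proof (pos_INR h). fold y.
    assert (INR h + 1 <= 2 * y) by lra.
    assert ((INR h + 1) * (INR h + 1 + 1) <= (2*y) * (2*y + 1)) by nra.
    lra.
  - intros H3 L HL HP. eapply Rle_trans. apply Leaves; auto.
    rewrite C_Pr. pose proof (pos_INR h).
    eapply Rle_trans. unfold Rdiv. apply Rmult_le_compat_r. left; apply Rinv_0_lt_compat; auto.
    apply Pr_amgm. lra.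
    fold y.
    assert (HB : INR h + 1 + (INR d - 1) / 2 <= INR d * (y - / 2 * (1 - 3 / INR d))).
    { unfold x in Hhx. replace (INR d * (y - / 2 * (1 - 3 / INR d))) with (INR d * y - INR d / 2 + 3 / 2) by (field; lra).
      lra. }
    replace (INR d ^ d / INR (fact d) * (y - / 2 * (1 - 3 / INR d)) ^ d)
      with ((INR d * (y - / 2 * (1 - 3 / INR d))) ^ d * / INR (fact d)) by (rewrite Rpow_mult_distr; unfold Rdiv; ring).
    apply Rmult_le_compat_r. left; apply Rinv_0_lt_compat; auto. apply pow_incr. split; auto.
    assert (0 <= (INR d - 1) / 2) by (unfold Rdiv; apply Rmult_le_pos; lra). lra.
  - intros H3. apply Rmult_le_compat_l. unfold Rdiv. apply Rmult_le_pos. apply pow_le; lra.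
    left; apply Rinv_0_lt_compat; auto.
    apply pow_incr. fold y. assert (3 / INR d <= 1).
    { apply Rmult_le_reg_r with (INR d). lra. unfold Rdiv; rewrite Rmult_assoc, Rinv_l by lra.
      replace 3 with (INR 3) by (simpl; ring). rewrite Rmult_1_r, Rmult_1_l. apply le_INR; auto. }
    assert (0 <= 3 / INR d) by (unfold Rdiv; apply Rmult_le_pos; [lra|left; apply Rinv_0_lt_compat; lra]).
    lra.
Qed.
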